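(* Let $F_0$ and $F_s$ be distribution functions, $U_r(t):=F_r^{\leftarrow}(1-1/t)=\bigl(1/(1-F_r)\bigr)^{\leftarrow}(t)$ for $t>1$, $r\in\{0,s\}$, and let $c\in\mathbb{R}$, $s\ge0$. Suppose $F_0$ is in the max-domain of attraction of $G_\gamma(x)=\exp\{-(1+\gamma x)^{-1/\gamma}\}$ with $\gamma>0$. Then $$\lim_{x\to\infty}\frac{1-F_s(x)}{1-F_0(x)}=e^{cs}\quad\Longleftrightarrow\quad\lim_{t\to\infty}\frac{U_s(t)}{U_0(t)}=e^{c\gamma s}.$$
   Context: $F^{\leftarrow}$ denotes the generalized (left-continuous) inverse. For $\gamma>0$ the right endpoint of $F_0$ is $+\infty$. *)

(* Defs.v *)
From Stdlib Require Import Reals.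
From Coquelicot Require Import Coquelicot.
Open Scope R_scope.

Definition distribution_function (F : R -> R) : Prop :=
  (forall x y, x <= y -> F x <= F y) /\
  (forall x, filterlim F (at_right x) (locally (F x))) /\
  is_lim F m_infty 0 /\
  is_lim F p_infty 1.

(* Generalized (left-continuous) inverse: F^<-(p) = inf { x | F x >= p }.
   For p in (0,1) and F a distribution function this infimum is finite. *)
Definition gen_inv (F : R -> R) (p : R) : R :=
  real (Glb_Rbar (fun x => p <= F x)).

Definition U (F : R -> R) (t : R) : R := gen_inv F (1 - / t).

Definition G (gamma x : R) : R :=
  if Req_EM_T gamma 0 then exp (- exp (- x))
  else if Rlt_dec 0 (1 + gamma * x) then exp (- Rpower (1 + gamma * x) (- / gamma))
  else if Rlt_dec 0 gamma then 0 else 1.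

(* F is in the max-domain of attraction of G_gamma: there exist a_n > 0 and b_n
   with F(a_n x + b_n)^n -> G_gamma(x) at every continuity point x of G_gamma
   (for gamma > 0, G_gamma is continuous, so at every x). *)
Definition max_domain_of_attraction (F : R -> R) (gamma : R) : Prop :=
  exists (a b : nat -> R), (forall n, 0 < a n) /\
    forall x, continuous (G gamma) x ->
      is_lim_seq (fun n => (F (a n * x + b n)) ^ n) (G gamma x).

(* Main.v *)
Require Import Defs.
From Stdlib Require Import Reals Lra Lia Classical Arith Wf_nat.
From Coquelicot Require Import Coquelicot.
Open Scope R_scope.

Lemma lim_pinf_elim (f : R -> R) (l : R) :
  is_lim f p_infty l -> forall eps, 0 < eps -> exists M, forall x, M < x -> Rabs (f x - l) < eps.
Proof.
  intros H eps Heps. apply is_lim_spec in H.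
  destruct (H (mkposreal eps Heps)) as [M HM]. exists M. intros x Hx. apply (HM x Hx).
Qed.

Lemma lim_pinf_intro (f : R -> R) (l : R) :
  (forall eps, 0 < eps -> exists M, forall x, M < x -> Rabs (f x - l) < eps) -> is_lim f p_infty l.
Proof.
  intros H. apply is_lim_spec. intros [eps Heps].
  destruct (H eps Heps) as [M HM]. exists M. intros x Hx. apply (HM x Hx).
Qed.

Lemma lim_minf_elim (f : R -> R) (l : R) :
  is_lim f m_infty l -> forall eps, 0 < eps -> exists M, forall x, x < M -> Rabs (f x - l) < eps.
Proof.
  intros H eps Heps. apply is_lim_spec in H.
  destruct (H (mkposreal eps Heps)) as [M HM]. exists M. intros x Hx. apply (HM x Hx).
Qed.

Lemma seq_elim (u : nat -> R) (l : R) :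
  is_lim_seq u l -> forall eps, 0 < eps -> exists N, forall n, (N <= n)%nat -> Rabs (u n - l) < eps.
Proof.
  intros H eps Heps. apply is_lim_seq_spec in H.
  destruct (H (mkposreal eps Heps)) as [N HN]. exists N. intros n Hn. apply (HN n Hn).
Qed.

Lemma seq_intro (u : nat -> R) (l : R) :
  (forall eps, 0 < eps -> exists N, forall n, (N <= n)%nat -> Rabs (u n - l) < eps) -> is_lim_seq u l.
Proof.
  intros H. apply is_lim_seq_spec. intros [eps Heps].
  destruct (H eps Heps) as [N HN]. exists N. intros n Hn. apply (HN n Hn).
Qed.

Section DF.
Variable F : R -> R.
Hypothesis HF : distribution_function F.

Lemma df_mono x y : x <= y -> F x <= F y.
Proof. destruct HF as [H _]. apply H. Qed.

Lemma df_le1 x : F x <= 1.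
Proof.
  destruct HF as [_ [_ [_ H]]].
  destruct (Rle_dec (F x) 1) as [h|h]; auto.
  destruct (lim_pinf_elim _ _ H (F x - 1)) as [M HM]; [lra|].
  set (y := Rmax M x + 1).
  assert (Hy: M < y) by (unfold y; generalize (Rmax_l M x); lra).
  specialize (HM y Hy). apply Rabs_def2 in HM.
  assert (F x <= F y) by (apply df_mono; unfold y; generalize (Rmax_r M x); lra). lra.
Qed.

Lemma df_ge0 x : 0 <= F x.
Proof.
  destruct HF as [_ [_ [H _]]].
  destruct (Rle_dec 0 (F x)) as [h|h]; auto.
  destruct (lim_minf_elim _ _ H (- F x)) as [M HM]; [lra|].
  set (y := Rmin M x - 1).
  assert (Hy: y < M) by (unfold y; generalize (Rmin_l M x); lra).
  specialize (HM y Hy). apply Rabs_def2 in HM.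
  assert (F y <= F x) by (apply df_mono; unfold y; generalize (Rmin_r M x); lra). lra.
Qed.

Lemma df_big p : p < 1 -> exists M, forall x, M < x -> p < F x.
Proof.
  intros Hp. destruct HF as [_ [_ [_ H]]].
  destruct (lim_pinf_elim _ _ H (1 - p)) as [M HM]; [lra|].
  exists M. intros x Hx. specialize (HM x Hx). apply Rabs_def2 in HM. lra.
Qed.

Lemma df_small p : 0 < p -> exists M, forall x, x < M -> F x < p.
Proof.
  intros Hp. destruct HF as [_ [_ [H _]]].
  destruct (lim_minf_elim _ _ H p) as [M HM]; [lra|].
  exists M. intros x Hx. specialize (HM x Hx). apply Rabs_def2 in HM. lra.
Qed.

Lemma ginv_fin p : 0 < p < 1 -> exists r, Glb_Rbar (fun x => p <= F x) = Finite r.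
Proof.
  intros Hp. destruct (Glb_Rbar_correct (fun x => p <= F x)) as [Hlb Hglb].
  destruct (df_big p) as [M HM]; [lra|].
  destruct (df_small p) as [m Hm]; [lra|].
  destruct (Glb_Rbar (fun x => p <= F x)) as [r| |] eqn:E.
  - exists r; auto.
  - exfalso. specialize (Hlb (M+1)). simpl in Hlb. apply Hlb. left. apply HM. lra.
  - exfalso. assert (Rbar_le m m_infty).
    { apply Hglb. intros x Hx. simpl. destruct (Rle_dec m x) as [h|h]; auto.
      exfalso. assert (F x < p) by (apply Hm; lra). lra. }
    simpl in H. auto.
Qed.

Lemma ginv_le p x : 0 < p < 1 -> p <= F x -> gen_inv F p <= x.
Proof.
  intros Hp Hx. unfold gen_inv. destruct (ginv_fin p Hp) as [r Hr]. rewrite Hr. simpl.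
  destruct (Glb_Rbar_correct (fun x => p <= F x)) as [Hlb _]. rewrite Hr in Hlb.
  apply (Hlb x Hx).
Qed.

Lemma ginv_ge p x : 0 < p < 1 -> F x < p -> x <= gen_inv F p.
Proof.
  intros Hp Hx. unfold gen_inv. destruct (ginv_fin p Hp) as [r Hr]. rewrite Hr. simpl.
  destruct (Glb_Rbar_correct (fun x => p <= F x)) as [_ Hglb]. rewrite Hr in Hglb.
  apply (Hglb (Finite x)). intros y Hy. simpl.
  destruct (Rle_dec x y) as [h|h]; auto. exfalso.
  assert (F y <= F x) by (apply df_mono; lra). lra.
Qed.

Lemma ginv_gt p z : 0 < p < 1 -> gen_inv F p < z -> p <= F z.
Proof.
  intros Hp Hz. unfold gen_inv in Hz. destruct (ginv_fin p Hp) as [r Hr]. rewrite Hr in Hz. simpl in Hz.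
  destruct (Glb_Rbar_correct (fun x => p <= F x)) as [_ Hglb]. rewrite Hr in Hglb.
  destruct (classic (exists w, p <= F w /\ w < z)) as [[w [Hw1 Hw2]]|Hn].
  - apply Rle_trans with (F w); auto. apply df_mono; lra.
  - exfalso. assert (Rbar_le z r).
    { apply Hglb. intros y Hy. simpl. destruct (Rle_dec z y) as [h|h]; auto.
      exfalso. apply Hn. exists y. split; auto; lra. }
    simpl in H. lra.
Qed.

Lemma ginv_lt p z : 0 < p < 1 -> z < gen_inv F p -> F z < p.
Proof.
  intros Hp Hz. destruct (Rlt_dec (F z) p) as [h|h]; auto.
  exfalso. assert (gen_inv F p <= z) by (apply ginv_le; auto; lra). lra.
Qed.

End DF.

Definition phi (gamma x : R) := Rpower (1 + gamma * x) (- / gamma).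

Lemma G_val gamma x : 0 < gamma -> 0 < 1 + gamma * x -> G gamma x = exp (- phi gamma x).
Proof.
  intros Hg Hx. unfold G, phi. destruct (Req_EM_T gamma 0); [lra|].
  destruct (Rlt_dec 0 (1 + gamma * x)); [auto|lra].
Qed.

Lemma G_cont gamma x : 0 < gamma -> 0 < 1 + gamma * x -> continuous (G gamma) x.
Proof.
  intros Hg Hx.
  apply continuous_ext_loc with (g := fun y => exp (- exp (- / gamma * ln (1 + gamma * y)))).
  - assert (Ho : open (fun y => 0 < 1 + gamma * y)).
    { apply (open_ext (fun y => - / gamma < y)).
      + intros y. split; intros H.
        * apply Rmult_lt_compat_l with (r := gamma) in H; auto.
          field_simplify in H; lra.
        * apply Rmult_lt_reg_l with gamma; auto. field_simplify; lra.
      + apply open_gt. }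
    apply (filter_imp (fun y => 0 < 1 + gamma * y)); [|apply Ho; auto].
    intros y Hy. rewrite G_val; auto.
  - apply (@ex_derive_continuous R_AbsRing R_NormedModule). auto_derive. lra.
Qed.

Lemma ln_contpt x : 0 < x -> continuity_pt ln x.
Proof.
  intros Hx. apply derivable_continuous_pt. exists (/ x). apply derivable_pt_lim_ln; auto.
Qed.

Lemma inv_n_lim : is_lim_seq (fun n => / INR n) 0.
Proof.
  assert (H := is_lim_seq_inv _ _ is_lim_seq_INR). simpl in H. apply H. discriminate.
Qed.

Lemma log_lemma (u : nat -> R) (ph : R) : 0 < ph -> (forall n, 0 <= u n <= 1) ->
  is_lim_seq (fun n => u n ^ n) (exp (- ph)) ->
  is_lim_seq (fun n => INR n * (1 - u n)) ph.
Proof.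
  intros Hph Hu Hlim.
  assert (He : 0 < exp (- ph)) by apply exp_pos.
  destruct (seq_elim _ _ Hlim (exp (- ph) / 2)) as [N HN]; [lra|].
  assert (Hpos : forall n, (Nat.max N 1 <= n)%nat -> 0 < u n).
  { intros n Hn. destruct (Hu n) as [Hu0 _]. destruct Hu0 as [h|h]; auto.
    exfalso. specialize (HN n ltac:(lia)). rewrite <- h in HN. rewrite pow_i in HN; [|lia].
    apply Rabs_def2 in HN. lra. }
  assert (H1 : is_lim_seq (fun n => ln (u n ^ n)) (- ph)).
  { rewrite <- (ln_exp (- ph)). apply is_lim_seq_continuous; auto. apply ln_contpt; auto. }
  assert (H2 : is_lim_seq (fun n => INR n * (- ln (u n))) ph).
  { apply is_lim_seq_ext_loc with (u := fun n => - ln (u n ^ n)).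
    - exists (Nat.max N 1). intros n Hn. rewrite ln_pow; [ring|]. apply Hpos; auto.
    - apply (is_lim_seq_opp _ (Finite (- ph))) in H1. simpl in H1. rewrite Ropp_involutive in H1. exact H1. }
  assert (H3 : is_lim_seq (fun n => - ln (u n)) 0).
  { apply is_lim_seq_ext_loc with (u := fun n => INR n * (- ln (u n)) * / INR n).
    - exists 1%nat. intros n Hn. field. apply not_0_INR. lia.
    - replace (Finite 0) with (Finite (ph * 0)) by (f_equal; ring).
      apply is_lim_seq_mult'; auto. apply inv_n_lim. }
  apply is_lim_seq_le_le_loc with (u := fun n => INR n * (- ln (u n)) * / (1 + (- ln (u n))))
     (w := fun n => INR n * (- ln (u n))).
  - exists (Nat.max N 1). intros n Hn.
    assert (Hun := Hpos n Hn). set (v := - ln (u n)).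
    assert (Huv : u n = exp (- v)) by (unfold v; rewrite Ropp_involutive, exp_ln; auto).
    assert (Hv0 : 0 <= v).
    { unfold v. assert (ln (u n) <= ln 1) by (apply ln_le; auto; apply Hu). rewrite ln_1 in H. lra. }
    assert (Hn0 : 0 <= INR n) by apply pos_INR.
    rewrite Huv. split.
    + assert (Hb : exp (- v) <= / (1 + v)).
      { rewrite exp_Ropp. apply Rinv_le_contravar; [lra|]. generalize (exp_ineq1_le v); lra. }
      assert (v * / (1 + v) <= 1 - exp (- v)).
      { replace (v * / (1 + v)) with (1 - / (1 + v)) by (field; lra). lra. }
      rewrite Rmult_assoc. apply Rmult_le_compat_l; auto.
    + apply Rmult_le_compat_l; auto. generalize (exp_ineq1_le (- v)); lra.
  - replace (Finite ph) with (Finite (ph * / (1 + 0))) by (f_equal; field).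
    apply is_lim_seq_mult'; auto. apply (is_lim_seq_inv _ (Finite (1 + 0))).
    + apply is_lim_seq_plus'; auto. apply is_lim_seq_const.
    + intro h. injection h. lra.
  - auto.
Qed.

Lemma abs_le_elim x e : Rabs x <= e -> - e <= x <= e.
Proof. intros H. split; [generalize (Rabs_Ropp x) (RRle_abs (- x))|generalize (RRle_abs x)]; lra. Qed.

Lemma half_facts m N : (1 <= N)%nat -> (2*N <= m)%nat ->
  (N <= m/2 /\ (m = 2*(m/2) \/ m = 2*(m/2)+1) /\ m/2 < m)%nat.
Proof. intros. pose proof (Nat.div_mod m 2 ltac:(lia)). pose proof (Nat.mod_upper_bound m 2 ltac:(lia)). lia. Qed.

Lemma finite_min (A : nat -> R) K : (forall n, 0 < A n) -> exists c, 0 < c /\ forall n, (n < K)%nat -> c <= A n.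
Proof.
  intros HA. induction K as [|K IH].
  - exists 1. split; [lra|]. intros n Hn. lia.
  - destruct IH as [c [Hc H]]. exists (Rmin c (A K)). split.
    + apply Rmin_pos; auto.
    + intros n Hn. destruct (Nat.eq_dec n K) as [->|h].
      * apply Rmin_r.
      * apply Rle_trans with c; [apply Rmin_l|]. apply H. lia.
Qed.

Lemma finite_max (V : nat -> R) K : exists M, 0 <= M /\ forall n, (n < K)%nat -> Rabs (V n) <= M.
Proof.
  induction K as [|K IH].
  - exists 0. split; [lra|]. intros n Hn. lia.
  - destruct IH as [M [HM H]]. exists (Rmax M (Rabs (V K))). split.
    + apply Rle_trans with M; auto; apply Rmax_l.
    + intros n Hn. destruct (Nat.eq_dec n K) as [->|h].
      * apply Rmax_r.
      * apply Rle_trans with M; [apply H; lia|apply Rmax_l].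
Qed.

Lemma bernoulli r k : 1 <= r -> 1 + INR k * (r - 1) <= r ^ k.
Proof.
  intros Hr. induction k as [|k IH].
  - simpl. lra.
  - rewrite S_INR. simpl.
    assert (1 <= r ^ k) by (apply pow_R1_Rle; auto). nra.
Qed.

Section Tele.
Variables (A V : nat -> R) (q : R).
Hypothesis Hq : 1 < q.
Hypothesis HA : forall n, 0 < A n.
Hypothesis Hd : forall eps, 0 < eps -> exists N, forall n, (N <= n)%nat -> forall m, (m = 2*n \/ m = 2*n+1)%nat ->
   Rabs (A m - q * A n) <= eps * A n /\ Rabs (V m - V n) <= eps * A n.

Let r := (1 + q) / 2.

Lemma grow_step : exists N, (1 <= N)%nat /\ forall n, (N <= n)%nat -> forall m, (m = 2*n \/ m = 2*n+1)%nat -> r * A n <= A m.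
Proof.
  destruct (Hd ((q - 1)/2)) as [N HN]; [lra|].
  exists (Nat.max N 1). split; [lia|]. intros n Hn m Hm. destruct (HN n ltac:(lia) m Hm) as [H1 _].
  apply abs_le_elim in H1. unfold r. assert (HAn := HA n). lra.
Qed.

Lemma A_infty : forall M, exists N, forall n, (N <= n)%nat -> M < A n.
Proof.
  intros M. destruct grow_step as [N [HN1 HN]].
  destruct (finite_min A (2*N) HA) as [c [Hc Hmin]].
  assert (Hr : 1 < r) by (unfold r; lra).
  assert (Hk : forall k m, (N * 2 ^ k <= m)%nat -> r ^ k * c <= A m).
  { induction k as [|k IHk].
    - simpl. intros m. rewrite Rmult_1_l.
      induction m as [m IH] using lt_wf_ind. intros Hm.
      destruct (Nat.lt_ge_cases m (2*N)) as [h|h].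
      + apply Hmin; auto.
      + destruct (half_facts m N HN1 h) as [h1 [h2 h3]].
        apply Rle_trans with (A (m/2)); [apply IH; lia|].
        apply Rle_trans with (r * A (m/2)); [|apply HN; auto].
        assert (0 < A (m/2)) by apply HA. nra.
    - intros m Hm. simpl in Hm.
      assert (h : (2 * N <= m)%nat) by (assert (2^k <> 0)%nat by (apply Nat.pow_nonzero; lia); nia).
      destruct (half_facts m N HN1 h) as [h1 [h2 h3]].
      assert (N * 2 ^ k <= m/2)%nat.
      { pose proof (Nat.div_mod m 2 ltac:(lia)). pose proof (Nat.mod_upper_bound m 2 ltac:(lia)). nia. }
      apply Rle_trans with (r * A (m/2)); [|apply HN; lia].
      simpl. rewrite Rmult_assoc. apply Rmult_le_compat_l; [lra|]. apply IHk; auto. }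
  destruct (INR_unbounded (Rmax 0 (M / (c * (r - 1))))) as [k Hk'].
  exists (N * 2 ^ k)%nat. intros n Hn.
  assert (Hb := bernoulli r k ltac:(lra)).
  assert (M / (c * (r - 1)) < INR k) by (generalize (Rmax_r 0 (M / (c * (r - 1)))); lra).
  assert (M < INR k * (c * (r - 1))).
  { apply Rmult_lt_compat_r with (r := c * (r - 1)) in H; [|nra].
    unfold Rdiv in H. rewrite Rmult_assoc, Rinv_l in H; [lra|nra]. }
  specialize (Hk k n Hn). nra.
Qed.

Lemma V_small : forall eta, 0 < eta -> exists N, forall n, (N <= n)%nat -> Rabs (V n) <= eta * A n.
Proof.
  intros eta Heta.
  assert (Hr : 1 < r) by (unfold r; lra).
  set (C := / (r - 1)).
  assert (HC : 0 < C) by (unfold C; apply Rinv_0_lt_compat; lra).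
  assert (HCr : C + 1 = C * r) by (unfold C; field; lra).
  set (eps := Rmin ((q - 1)/2) (eta / (2 * C))).
  assert (He : 0 < eps) by (apply Rmin_pos; [lra|apply Rdiv_lt_0_compat; lra]).
  assert (He1 : eps <= (q - 1)/2) by apply Rmin_l.
  assert (He2 : eps * C <= eta / 2).
  { assert (eps <= eta / (2 * C)) by apply Rmin_r.
    apply Rmult_le_compat_r with (r := C) in H; [|lra].
    replace (eta / (2 * C) * C) with (eta / 2) in H by (field; lra). exact H. }
  destruct (Hd eps He) as [N0 HN0].
  set (N := Nat.max N0 1).
  destruct (finite_max V (2*N)) as [Mv [HMv Hmax]].
  assert (Q : forall m, (N <= m)%nat -> Rabs (V m) <= Mv + eps * C * A m).
  { induction m as [m IH] using lt_wf_ind. intros Hm.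
    assert (HAm := HA m).
    destruct (Nat.lt_ge_cases m (2*N)) as [h|h].
    + assert (0 <= eps * C * A m) by (apply Rmult_le_pos; [nra|lra]).
      specialize (Hmax m h). lra.
    + destruct (half_facts m N ltac:(unfold N; lia) h) as [h1 [h2 h3]].
      destruct (HN0 (m/2)%nat ltac:(unfold N in h1; lia) m h2) as [H1 H2].
      specialize (IH (m/2)%nat h3 h1).
      assert (HAn := HA (m/2)).
      apply abs_le_elim in H1.
      assert (Rabs (V m) <= Rabs (V (m/2)) + eps * A (m/2)).
      { replace (V m) with (V (m/2) + (V m - V (m/2))) by ring.
        generalize (Rabs_triang (V (m/2)) (V m - V (m/2))). lra. }
      assert (eps * A (m/2) <= (q - 1) / 2 * A (m/2)) by (apply Rmult_le_compat_r; lra).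
      assert (r * A (m/2) <= A m) by (unfold r; lra).
      assert (eps * C * A (m/2) + eps * A (m/2) = eps * (C * r) * A (m/2)) by (rewrite <- HCr; ring).
      assert (eps * C * (r * A (m/2)) <= eps * C * A m) by (apply Rmult_le_compat_l; nra).
      nra. }
  destruct (A_infty (2 * Mv / eta)) as [N1 HN1].
  exists (Nat.max N N1). intros n Hn.
  specialize (Q n ltac:(lia)). specialize (HN1 n ltac:(lia)).
  assert (Mv <= eta / 2 * A n).
  { apply Rmult_lt_compat_l with (r := eta / 2) in HN1; [|lra].
    replace (eta / 2 * (2 * Mv / eta)) with Mv in HN1 by (field; lra). lra. }
  assert (eps * C * A n <= eta / 2 * A n) by (apply Rmult_le_compat_r; [left; apply HA|lra]).
  lra.
Qed.

End Tele.

Lemma mda_seq F0 gamma : distribution_function F0 -> 0 < gamma -> max_domain_of_attraction F0 gamma ->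
  exists a b : nat -> R, (forall n, 0 < a n) /\ forall x, 0 < 1 + gamma * x ->
    is_lim_seq (fun n => INR n * (1 - F0 (a n * x + b n))) (phi gamma x).
Proof.
  intros HF Hg [a [b [Ha Hl]]]. exists a, b. split; auto. intros x Hx.
  apply log_lemma.
  - unfold phi, Rpower. apply exp_pos.
  - intros n. split; [apply df_ge0|apply df_le1]; auto.
  - rewrite <- G_val; auto. apply Hl. apply G_cont; auto.
Qed.

Section Phi.
Variable g : R.
Hypothesis Hg : 0 < g.

Lemma phi_pos x : 0 < phi g x.
Proof. unfold phi, Rpower. apply exp_pos. Qed.

Lemma phi_dec x y : 0 < 1 + g * x -> x < y -> phi g y < phi g x.
Proof.
  intros Hx Hxy. unfold phi, Rpower. apply exp_increasing.
  assert (ln (1 + g * x) < ln (1 + g * y)).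
  { apply ln_increasing; auto. apply Rplus_lt_compat_l. apply Rmult_lt_compat_l; auto. }
  assert (0 < / g) by (apply Rinv_0_lt_compat; auto). nra.
Qed.

Lemma phi_cont x : 0 < 1 + g * x -> forall d, 0 < d -> exists e, 0 < e /\
  forall y, Rabs (y - x) < e -> Rabs (phi g y - phi g x) < d.
Proof.
  intros Hx d Hd.
  assert (Hc : continuity_pt (phi g) x).
  { apply continuity_pt_filterlim.
    assert (H : continuous (fun y => exp (- / g * ln (1 + g * y))) x).
    { apply (@ex_derive_continuous R_AbsRing R_NormedModule). auto_derive. lra. }
    exact H. }
  destruct (proj1 (continuity_pt_locally _ _) Hc (mkposreal d Hd)) as [[e He] H].
  exists e. split; auto.
Qed.

Lemma phi_zero : phi g 0 = 1.
Proof. unfold phi, Rpower. rewrite Rmult_0_r, Rplus_0_r, ln_1, Rmult_0_r, exp_0. auto. Qed.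

End Phi.

Lemma odd_helper n w ph d : 0 <= n -> 0 < ph -> ph < d * n -> Rabs ((2 * n + 1) * w - ph) < d -> Rabs (n * w - ph / 2) < d.
Proof.
  intros Hn Hph Hd H. apply Rabs_def2 in H.
  assert (E : (2 * n + 1) * (n * w - ph / 2) = n * ((2 * n + 1) * w - ph) - ph / 2) by field.
  assert (B1 : n * ((2 * n + 1) * w - ph) <= n * d) by (apply Rmult_le_compat_l; lra).
  assert (B2 : n * (- d) <= n * ((2 * n + 1) * w - ph)) by (apply Rmult_le_compat_l; lra).
  assert (Hp : 0 < 2 * n + 1) by lra.
  apply Rabs_def1.
  - apply Rmult_lt_reg_l with (2 * n + 1); auto. rewrite E. nra.
  - apply Rmult_lt_reg_l with (2 * n + 1); auto. rewrite E. nra.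
Qed.

Lemma lt_inv_iff x b : 0 < b -> (x < 1 / b <-> x * b < 1).
Proof.
  intros Hb. split; intros H.
  - apply Rmult_lt_compat_r with (r := b) in H; auto. unfold Rdiv in H. rewrite Rmult_assoc, Rinv_l, Rmult_1_r in H by lra. auto.
  - apply Rmult_lt_reg_r with b; auto. unfold Rdiv. rewrite Rmult_assoc, Rinv_l, Rmult_1_r by lra. auto.
Qed.
Lemma gt_inv_iff x b : 0 < b -> (1 / b < x <-> 1 < x * b).
Proof.
  intros Hb. split; intros H.
  - apply Rmult_lt_compat_r with (r := b) in H; auto. unfold Rdiv in H. rewrite Rmult_assoc, Rinv_l, Rmult_1_r in H by lra. auto.
  - apply Rmult_lt_reg_r with b; auto. unfold Rdiv. rewrite Rmult_assoc, Rinv_l, Rmult_1_r by lra. auto.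
Qed.
Lemma le_inv_iff x b : 0 < b -> (x <= 1 / b <-> x * b <= 1).
Proof.
  intros Hb. split; intros H.
  - apply Rmult_le_compat_r with (r := b) in H; [|lra]. unfold Rdiv in H. rewrite Rmult_assoc, Rinv_l, Rmult_1_r in H by lra. auto.
  - apply Rmult_le_reg_r with b; auto. unfold Rdiv. rewrite Rmult_assoc, Rinv_l, Rmult_1_r by lra. auto.
Qed.

Lemma ratio_helper A B L t eta : 0 < L -> 0 < t -> 0 < eta -> Rabs (A - L) < t -> Rabs (B - 1) < t -> t <= 1/2 ->
  t * (4 * (1 + L)) <= eta -> Rabs (A / B - L) < eta.
Proof.
  intros HL Ht He HA HB Ht2 Hte. apply Rabs_def2 in HA, HB.
  assert (HB0 : 1/2 < B) by lra.
  assert (E : A / B - L = (A - L * B) / B) by (field; lra).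
  rewrite E. apply Rabs_def1.
  - apply Rmult_lt_reg_r with B; [lra|]. unfold Rdiv. rewrite Rmult_assoc, Rinv_l by lra. nra.
  - apply Rmult_lt_reg_r with B; [lra|]. unfold Rdiv. rewrite Rmult_assoc, Rinv_l by lra. nra.
Qed.

Section Sandwich.
Variables (h : R -> R) (a b : nat -> R) (g : R).
Hypothesis Hg : 0 < g.
Hypothesis Ha : forall n, 0 < a n.
Hypothesis Hh : forall x y, x <= y -> h y <= h x.
Hypothesis Hlim : forall x, 0 < 1 + g * x ->
    is_lim_seq (fun n => INR n * h (a n * x + b n)) (phi g x).

Lemma margin x0 e : 0 < 1 + g * x0 -> 0 < e -> exists e', 0 < e' /\ e' <= e /\ 0 < 1 + g * (x0 - e').
Proof.
  intros Hx He. exists (Rmin e ((1 + g * x0) / (2 * g))). split; [|split].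
  - apply Rmin_pos; auto. apply Rdiv_lt_0_compat; lra.
  - apply Rmin_l.
  - assert (Rmin e ((1 + g * x0) / (2 * g)) <= (1 + g * x0) / (2 * g)) by apply Rmin_r.
    assert (g * Rmin e ((1 + g * x0) / (2 * g)) <= g * ((1 + g * x0) / (2 * g))) by (apply Rmult_le_compat_l; lra).
    replace (g * ((1 + g * x0) / (2 * g))) with ((1 + g * x0) / 2) in H0 by (field; lra). nra.
Qed.

Lemma S1 x0 : 0 < 1 + g * x0 -> forall e, 0 < e -> exists d, 0 < d /\ exists N, forall n, (N <= n)%nat ->
  forall z, Rabs (INR n * h z - phi g x0) < d -> Rabs (z - (a n * x0 + b n)) < e * a n.
Proof.
  intros Hx e He. destruct (margin x0 e Hx He) as [e' [He' [He'e Hm]]].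
  assert (Hp : 0 < 1 + g * (x0 + e')) by nra.
  set (d := Rmin (phi g (x0 - e') - phi g x0) (phi g x0 - phi g (x0 + e')) / 2).
  assert (Hd1 : phi g x0 < phi g (x0 - e')) by (apply phi_dec; auto; lra).
  assert (Hd2 : phi g (x0 + e') < phi g x0) by (apply phi_dec; auto; lra).
  assert (Hd : 0 < d) by (unfold d; apply Rdiv_lt_0_compat; [apply Rmin_pos|]; lra).
  assert (Hd1' : 2 * d <= phi g (x0 - e') - phi g x0) by (unfold d; generalize (Rmin_l (phi g (x0 - e') - phi g x0) (phi g x0 - phi g (x0 + e'))); lra).
  assert (Hd2' : 2 * d <= phi g x0 - phi g (x0 + e')) by (unfold d; generalize (Rmin_r (phi g (x0 - e') - phi g x0) (phi g x0 - phi g (x0 + e'))); lra).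
  exists d. split; auto.
  destruct (seq_elim _ _ (Hlim _ Hm) d Hd) as [N1 HN1].
  destruct (seq_elim _ _ (Hlim _ Hp) d Hd) as [N2 HN2].
  exists (Nat.max 1 (Nat.max N1 N2)). intros n Hn z Hz.
  specialize (HN1 n ltac:(lia)). specialize (HN2 n ltac:(lia)).
  apply Rabs_def2 in HN1, HN2, Hz.
  assert (Hn0 : 0 < INR n) by (apply lt_0_INR; lia).
  assert (Han := Ha n).
  assert (z < a n * (x0 + e') + b n).
  { destruct (Rlt_dec z (a n * (x0 + e') + b n)) as [h1|h1]; auto. exfalso.
    assert (h (a n * (x0 + e') + b n) >= h z) by (apply Rle_ge, Hh; lra).
    assert (INR n * h z <= INR n * h (a n * (x0 + e') + b n)) by (apply Rmult_le_compat_l; lra). lra. }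
  assert (a n * (x0 - e') + b n < z).
  { destruct (Rlt_dec (a n * (x0 - e') + b n) z) as [h1|h1]; auto. exfalso.
    assert (h (a n * (x0 - e') + b n) <= h z) by (apply Hh; lra).
    assert (INR n * h (a n * (x0 - e') + b n) <= INR n * h z) by (apply Rmult_le_compat_l; lra). lra. }
  assert (e' * a n <= e * a n) by (apply Rmult_le_compat_r; lra).
  apply Rabs_def1; nra.
Qed.

Lemma S2 x0 : 0 < 1 + g * x0 -> forall d, 0 < d -> exists e, 0 < e /\ exists N, forall n, (N <= n)%nat ->
  forall z, Rabs (z - (a n * x0 + b n)) < e * a n -> Rabs (INR n * h z - phi g x0) < d.
Proof.
  intros Hx d Hd. destruct (phi_cont g x0 Hx (d/2)) as [e1 [He1 Hc]]; [lra|].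
  destruct (margin x0 (e1 / 2) Hx) as [e' [He' [He'e Hm]]]; [lra|].
  assert (Hp : 0 < 1 + g * (x0 + e')) by nra.
  exists e'. split; auto.
  destruct (seq_elim _ _ (Hlim _ Hm) (d/2)) as [N1 HN1]; [lra|].
  destruct (seq_elim _ _ (Hlim _ Hp) (d/2)) as [N2 HN2]; [lra|].
  exists (Nat.max N1 N2). intros n Hn z Hz.
  specialize (HN1 n ltac:(lia)). specialize (HN2 n ltac:(lia)).
  apply Rabs_def2 in HN1, HN2, Hz.
  assert (C1 := Hc (x0 - e') ltac:(rewrite Rabs_left; lra)).
  assert (C2 := Hc (x0 + e') ltac:(rewrite Rabs_right; lra)).
  apply Rabs_def2 in C1, C2.
  assert (Hn0 : 0 <= INR n) by apply pos_INR.
  assert (h z <= h (a n * (x0 - e') + b n)) by (apply Hh; nra).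
  assert (h (a n * (x0 + e') + b n) <= h z) by (apply Hh; nra).
  assert (INR n * h z <= INR n * h (a n * (x0 - e') + b n)) by (apply Rmult_le_compat_l; lra).
  assert (INR n * h (a n * (x0 + e') + b n) <= INR n * h z) by (apply Rmult_le_compat_l; lra).
  apply Rabs_def1; lra.
Qed.


Definition qq := Rpower 2 g.

Lemma qq_gt1 : 1 < qq.
Proof. unfold qq. rewrite <- (Rpower_O 2) at 1 by lra. apply Rpower_lt; lra. Qed.

Lemma phi_half x : 0 < 1 + g * x -> phi g ((qq * (1 + g * x) - 1) / g) = phi g x / 2.
Proof.
  intros Hx. unfold phi.
  replace (1 + g * ((qq * (1 + g * x) - 1) / g)) with (qq * (1 + g * x)) by (field; lra).
  assert (Hq : 0 < qq) by (generalize qq_gt1; lra).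
  rewrite <- Rpower_mult_distr; auto.
  unfold qq at 1. rewrite Rpower_mult.
  replace (g * - / g) with (- (1)) by (field; lra).
  rewrite Rpower_Ropp, Rpower_1 by lra. unfold Rdiv. ring.
Qed.

Lemma Dbl_raw x : 0 < 1 + g * x -> forall e, 0 < e -> exists N, forall n, (N <= n)%nat ->
  forall m, (m = 2*n \/ m = 2*n+1)%nat ->
  Rabs (a m * x + b m - (a n * ((qq * (1 + g * x) - 1) / g) + b n)) < e * a n.
Proof.
  intros Hx e He.
  set (Tx := (qq * (1 + g * x) - 1) / g).
  assert (HT : 0 < 1 + g * Tx).
  { unfold Tx. replace (1 + g * ((qq * (1 + g * x) - 1) / g)) with (qq * (1 + g * x)) by (field; lra).
    generalize qq_gt1; nra. }
  destruct (S1 Tx HT e He) as [d [Hd [N1 HN1]]].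
  destruct (seq_elim _ _ (Hlim x Hx) d Hd) as [N2 HN2].
  set (ph := phi g x). assert (Hph : 0 < ph) by apply phi_pos.
  destruct (INR_unbounded (ph / d)) as [N3 HN3].
  exists (Nat.max 1 (Nat.max N1 (Nat.max N2 N3))). intros n Hn m Hm.
  apply HN1; [lia|].
  unfold Tx. rewrite phi_half; auto. fold ph.
  specialize (HN2 m ltac:(lia)). simpl in HN2. fold ph in HN2.
  set (w := h (a m * x + b m)) in *.
  assert (HnN3 : INR N3 <= INR n) by (apply le_INR; lia).
  assert (Hnd : ph < d * INR n).
  { apply Rmult_lt_reg_r with (/ d). apply Rinv_0_lt_compat; lra.
    replace (d * INR n * / d) with (INR n) by (field; lra). unfold Rdiv in HN3. lra. }
  destruct Hm as [-> | ->].
  - rewrite mult_INR in HN2. simpl in HN2. apply Rabs_def2 in HN2. apply Rabs_def1; lra.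
  - rewrite plus_INR, mult_INR in HN2. simpl in HN2.
    apply odd_helper; auto. apply pos_INR.
Qed.


Lemma Dbl eps : 0 < eps -> exists N, forall n, (N <= n)%nat -> forall m, (m = 2*n \/ m = 2*n+1)%nat ->
   Rabs (a m - qq * a n) <= eps * a n /\
   Rabs ((b m - a m / g) - (b n - a n / g)) <= eps * a n.
Proof.
  intros He.
  set (ep := eps * g / (2 * g + 4)).
  assert (Hep : 0 < ep) by (unfold ep; apply Rdiv_lt_0_compat; nra).
  assert (H0 : 0 < 1 + g * 0) by lra. assert (H1 : 0 < 1 + g * 1) by lra.
  destruct (Dbl_raw 0 H0 ep Hep) as [N0 HN0].
  destruct (Dbl_raw 1 H1 ep Hep) as [N1 HN1].
  exists (Nat.max N0 N1). intros n Hn m Hm.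
  specialize (HN0 n ltac:(lia) m Hm). specialize (HN1 n ltac:(lia) m Hm).
  set (T0 := (qq - 1) / g).
  replace ((qq * (1 + g * 0) - 1) / g) with T0 in HN0 by (unfold T0; field; lra).
  replace ((qq * (1 + g * 1) - 1) / g) with (qq + T0) in HN1 by (unfold T0; field; lra).
  apply Rabs_def2 in HN0, HN1.
  rewrite Rmult_0_r, Rplus_0_l in HN0.
  assert (Han := Ha n).
  set (X := ep * a n) in *. set (Y := eps * a n).
  assert (Hep2 : 2 * ep <= eps).
  { assert (2 * ep * (2 * g + 4) = 2 * eps * g) by (unfold ep; field; lra). nra. }
  assert (HX : 2 * X <= Y) by (unfold X, Y; nra).
  assert (HXY : X * (1 + 2 / g) = Y / 2).
  { unfold X, Y, ep. field. lra. }
  assert (Hig : 0 < / g) by (apply Rinv_0_lt_compat; lra).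
  set (e1 := b m - (a n * T0 + b n)) in *.
  set (e2 := a m * 1 + b m - (a n * (qq + T0) + b n)) in *.
  assert (E1 : a m - qq * a n = e2 - e1) by (unfold e1, e2; ring).
  assert (E2 : (b m - a m / g) - (b n - a n / g) = e1 - (e2 - e1) * / g).
  { unfold e1, e2, T0. field. lra. }
  assert (Hb1 : (e2 - e1) * / g < 2 * X * / g) by (apply Rmult_lt_compat_r; lra).
  assert (Hb2 : - (2 * X) * / g < (e2 - e1) * / g) by (apply Rmult_lt_compat_r; lra).
  assert (HXg : X + 2 * X * / g = Y / 2) by (rewrite <- HXY; unfold Rdiv; ring).
  rewrite E1, E2. split; apply Rabs_le; lra.
Qed.

Lemma a_inf : forall M, exists N, forall n, (N <= n)%nat -> M < a n.
Proof.
  apply (A_infty a (fun k => b k - a k / g) qq qq_gt1 Ha Dbl).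
Qed.

Lemma u_small : forall eta, 0 < eta -> exists N, forall n, (N <= n)%nat -> Rabs (b n - a n / g) <= eta * a n.
Proof.
  apply (V_small a (fun k => b k - a k / g) qq qq_gt1 Ha Dbl).
Qed.

Lemma h_pos y : 0 < h y.
Proof.
  assert (H0 : 0 < 1 + g * 0) by lra.
  destruct (seq_elim _ _ (Hlim 0 H0) (1/2)) as [N1 HN1]; [lra|].
  rewrite phi_zero in HN1; auto.
  destruct (u_small (1 / (2 * g))) as [N2 HN2]; [apply Rdiv_lt_0_compat; lra|].
  destruct (a_inf (2 * g * Rabs y)) as [N3 HN3].
  set (n := Nat.max N1 (Nat.max N2 N3)).
  specialize (HN1 n ltac:(unfold n; lia)). specialize (HN2 n ltac:(unfold n; lia)). specialize (HN3 n ltac:(unfold n; lia)).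
  rewrite Rmult_0_r, Rplus_0_l in HN1.
  apply Rabs_def2 in HN1. apply abs_le_elim in HN2.
  assert (Han := Ha n).
  assert (Hbn : a n / (2 * g) <= b n).
  { assert (a n / g - 1 / (2 * g) * a n = a n / (2 * g)) by (field; lra). lra. }
  assert (y <= b n).
  { assert (Rabs y < a n / (2 * g)).
    { apply Rmult_lt_reg_l with (2 * g); [lra|]. replace (2 * g * (a n / (2 * g))) with (a n) by (field; lra). lra. }
    generalize (RRle_abs y). lra. }
  assert (Hhb : 0 < h (b n)).
  { destruct (Rlt_dec 0 (h (b n))) as [hh|hh]; auto. exfalso.
    assert (INR n * h (b n) <= INR n * 0) by (apply Rmult_le_compat_l; [apply pos_INR|lra]). lra. }
  apply Rlt_le_trans with (h (b n)); auto.
Qed.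


Lemma RV (Hh0 : forall eta, 0 < eta -> exists Y, forall y, Y < y -> h y < eta) :
  forall lam, 0 < lam -> forall eta, 0 < eta -> exists Y, forall y, Y < y ->
    Rabs (h (lam * y) / h y - Rpower lam (- / g)) < eta.
Proof.
  intros lam Hl eta Heta.
  set (x1 := (lam - 1) / g).
  assert (Hx1 : 0 < 1 + g * x1) by (unfold x1; replace (1 + g * ((lam - 1) / g)) with lam by (field; lra); auto).
  assert (HL : phi g x1 = Rpower lam (- / g)).
  { unfold phi, x1. f_equal. field. lra. }
  set (L := phi g x1) in *. assert (HL0 : 0 < L) by apply phi_pos.
  set (t := Rmin (1/2) (eta / (4 * (1 + L)))).
  assert (Ht : 0 < t) by (apply Rmin_pos; [lra|apply Rdiv_lt_0_compat; lra]).
  assert (Ht1 : t <= 1/2) by apply Rmin_l.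
  assert (Ht2 : t * (4 * (1 + L)) <= eta).
  { assert (t <= eta / (4 * (1 + L))) by apply Rmin_r.
    apply Rmult_le_compat_r with (r := 4 * (1 + L)) in H; [|lra].
    replace (eta / (4 * (1 + L)) * (4 * (1 + L))) with eta in H by (field; lra). auto. }
  destruct (S2 x1 Hx1 t Ht) as [e2 [He2 [N2 HN2]]].
  assert (H0 : 0 < 1 + g * 0) by lra.
  destruct (S1 0 H0 (e2 / (2 * lam))) as [d1 [Hd1 [N1 HN1]]]; [apply Rdiv_lt_0_compat; lra|].
  rewrite phi_zero in HN1; auto.
  set (eu := e2 / (2 * (Rabs (lam - 1) + 1))).
  assert (Heu : 0 < eu) by (unfold eu; apply Rdiv_lt_0_compat; [lra|generalize (Rabs_pos (lam - 1)); lra]).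
  destruct (u_small eu Heu) as [N4 HN4].
  set (d := Rmin d1 t). assert (Hd : 0 < d) by (apply Rmin_pos; lra).
  destruct (INR_unbounded (1 / d)) as [N5 HN5].
  set (N := Nat.max 1 (Nat.max N1 (Nat.max N2 (Nat.max N4 N5)))).
  assert (HN0 : 0 < INR N + 1) by (generalize (pos_INR N); lra).
  destruct (Hh0 (1 / (INR N + 1))) as [Y HY]; [apply Rdiv_lt_0_compat; lra|].
  exists Y. intros y Hy.
  specialize (HY y Hy). assert (Hhy := h_pos y).
  destruct (nfloor_ex (1 / h y)) as [n [Hn1 Hn2]]; [left; apply Rdiv_lt_0_compat; lra|].
  assert (HNy : INR N + 1 < 1 / h y).
  { apply (proj1 (lt_inv_iff _ _ HN0)) in HY. apply (proj2 (lt_inv_iff _ _ Hhy)). lra. }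
  assert (HnN : (N < n)%nat) by (apply INR_lt; lra).
  assert (Hnh1 : INR n * h y <= 1) by (apply (proj1 (le_inv_iff _ _ Hhy) Hn1)).
  assert (Hnh2 : 1 < (INR n + 1) * h y) by (apply (proj1 (gt_inv_iff _ _ Hhy) Hn2)).
  assert (Hhd : h y < d).
  { assert (INR N5 <= INR N) by (apply le_INR; unfold N; lia).
    assert (Hd' : 1 / d < INR N + 1) by lra.
    apply (proj1 (gt_inv_iff _ _ Hd)) in Hd'. apply (proj1 (lt_inv_iff _ _ HN0)) in HY. nra. }
  assert (Hdd1 : d <= d1) by apply Rmin_l. assert (Hdt : d <= t) by apply Rmin_r.
  assert (HB : Rabs (INR n * h y - 1) < d) by (apply Rabs_def1; lra).
  specialize (HN1 n ltac:(unfold N in HnN; lia) y ltac:(lra)).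
  rewrite Rmult_0_r, Rplus_0_l in HN1.
  specialize (HN4 n ltac:(unfold N in HnN; lia)).
  assert (Han := Ha n).
  assert (HA : Rabs (INR n * h (lam * y) - L) < t).
  { apply (HN2 n ltac:(unfold N in HnN; lia)).
    replace (lam * y - (a n * x1 + b n)) with (lam * (y - b n) + (lam - 1) * (b n - a n / g)) by (unfold x1; field; lra).
    apply Rle_lt_trans with (Rabs (lam * (y - b n)) + Rabs ((lam - 1) * (b n - a n / g))); [apply Rabs_triang|].
    rewrite !Rabs_mult, (Rabs_right lam) by lra.
    assert (lam * Rabs (y - b n) < lam * (e2 / (2 * lam) * a n)) by (apply Rmult_lt_compat_l; lra).
    replace (lam * (e2 / (2 * lam) * a n)) with (e2 / 2 * a n) in H by (field; lra).
    assert (Rabs (lam - 1) * Rabs (b n - a n / g) <= Rabs (lam - 1) * (eu * a n)) by (apply Rmult_le_compat_l; [apply Rabs_pos|auto]).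
    assert (Rabs (lam - 1) * eu <= e2 / 2).
    { unfold eu. assert (0 <= Rabs (lam - 1)) by apply Rabs_pos.
      replace (Rabs (lam - 1) * (e2 / (2 * (Rabs (lam - 1) + 1)))) with (e2 / 2 * (Rabs (lam - 1) / (Rabs (lam - 1) + 1))) by (field; lra).
      assert (Rabs (lam - 1) / (Rabs (lam - 1) + 1) <= 1).
      { apply Rmult_le_reg_r with (Rabs (lam - 1) + 1); [lra|]. unfold Rdiv. rewrite Rmult_assoc, Rinv_l by lra. lra. }
      assert (0 <= e2 / 2) by lra. nra. }
    assert (Rabs (lam - 1) * (eu * a n) <= e2 / 2 * a n) by (rewrite <- Rmult_assoc; apply Rmult_le_compat_r; lra).
    lra. }
  rewrite <- HL.
  replace (h (lam * y) / h y) with ((INR n * h (lam * y)) / (INR n * h y)).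
  - apply ratio_helper with t; auto. apply Rabs_def2 in HB. apply Rabs_def1; lra.
  - field. split; [lra|]. apply not_0_INR. lia.
Qed.

End Sandwich.

Lemma rp_pos x y : 0 < Rpower x y.
Proof. unfold Rpower. apply exp_pos. Qed.

Lemma rp_inv_neg x a : 0 < x -> Rpower (/ x) (- a) = Rpower x a.
Proof. intros Hx. unfold Rpower. rewrite ln_Rinv by auto. f_equal. ring. Qed.

Lemma rp_g_inv x g : 0 < g -> 0 < x -> Rpower (Rpower x g) (/ g) = x.
Proof. intros Hg Hx. rewrite Rpower_mult. replace (g * / g) with 1 by (field; lra). apply Rpower_1; auto. Qed.

Lemma ppos t : 1 < t -> 0 < 1 - / t < 1.
Proof.
  intros Ht. assert (0 < / t) by (apply Rinv_0_lt_compat; lra).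
  assert (/ t < 1). { rewrite <- Rinv_1. apply Rinv_lt_contravar; lra. } lra.
Qed.

Lemma inv_swap u T : 0 < u -> 0 < T -> u < / T -> T < / u.
Proof.
  intros Hu HT H. rewrite <- (Rinv_inv T). apply Rinv_lt_contravar; auto.
  apply Rmult_lt_0_compat; auto. apply Rinv_0_lt_compat; auto.
Qed.

Lemma bound_ratio u v K0 e eps : 0 < u -> 0 < e -> e < eps -> (K0 - e) * u <= v -> v <= (K0 + e) * u ->
  Rabs (v / u - K0) < eps.
Proof.
  intros Hu He Hee H1 H2.
  assert (E : v / u - K0 = (v - K0 * u) / u) by (field; lra).
  rewrite E. apply Rabs_def1.
  - apply Rmult_lt_reg_r with u; auto. unfold Rdiv. rewrite Rmult_assoc, Rinv_l by lra. nra.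
  - apply Rmult_lt_reg_r with u; auto. unfold Rdiv. rewrite Rmult_assoc, Rinv_l by lra. nra.
Qed.

Section Main.
Variables F0 Fs : R -> R.
Variables g k : R.
Hypothesis HF0 : distribution_function F0.
Hypothesis HFs : distribution_function Fs.
Hypothesis Hg : 0 < g.
Hypothesis Hk : 0 < k.
Hypothesis Hpos0 : forall y, 0 < 1 - F0 y.
Hypothesis HRV : forall lam, 0 < lam -> forall eta, 0 < eta -> exists Y, forall y, Y < y ->
    Rabs ((1 - F0 (lam * y)) / (1 - F0 y) - Rpower lam (- / g)) < eta.

Let K := Rpower k g.

Lemma K_pos : 0 < K.
Proof. apply rp_pos. Qed.

Lemma K_alpha : Rpower K (/ g) = k.
Proof. apply rp_g_inv; auto. Qed.

Lemma RVup lam eta : 0 < lam -> 0 < eta -> exists Y, forall y, Y < y ->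
  1 - F0 (lam * y) <= (Rpower lam (- / g) + eta) * (1 - F0 y).
Proof.
  intros Hl He. destruct (HRV lam Hl eta He) as [Y HY]. exists Y. intros y Hy.
  specialize (HY y Hy). apply Rabs_def2 in HY. assert (Hp := Hpos0 y).
  replace (1 - F0 (lam * y)) with ((1 - F0 (lam * y)) / (1 - F0 y) * (1 - F0 y)) by (field; lra).
  apply Rmult_le_compat_r; lra.
Qed.

Lemma RVlo lam eta : 0 < lam -> 0 < eta -> exists Y, forall y, Y < y ->
  (Rpower lam (- / g) - eta) * (1 - F0 y) <= 1 - F0 (lam * y).
Proof.
  intros Hl He. destruct (HRV lam Hl eta He) as [Y HY]. exists Y. intros y Hy.
  specialize (HY y Hy). apply Rabs_def2 in HY. assert (Hp := Hpos0 y).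
  replace (1 - F0 (lam * y)) with ((1 - F0 (lam * y)) / (1 - F0 y) * (1 - F0 y)) by (field; lra).
  apply Rmult_le_compat_r; lra.
Qed.

Lemma U0_inf M : exists T, 1 <= T /\ forall t, T < t -> M <= U F0 t.
Proof.
  assert (Hp := Hpos0 M).
  exists (Rmax 1 (/ (1 - F0 M))). split; [apply Rmax_l|]. intros t Ht.
  assert (Ht1 : 1 < t) by (generalize (Rmax_l 1 (/ (1 - F0 M))); lra).
  assert (Ht2 : / (1 - F0 M) < t) by (generalize (Rmax_r 1 (/ (1 - F0 M))); lra).
  unfold U. apply ginv_ge; auto. apply ppos; auto.
  assert (/ t < / / (1 - F0 M)).
  { apply Rinv_lt_contravar; auto. apply Rmult_lt_0_compat; [apply Rinv_0_lt_compat|]; lra. }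
  rewrite Rinv_inv in H. lra.
Qed.

Lemma h0_small T : 0 < T -> exists M, forall z, M < z -> 1 - F0 z < / T.
Proof.
  intros HT. destruct (df_big F0 HF0 (1 - / T)) as [M HM].
  { assert (0 < / T) by (apply Rinv_0_lt_compat; auto). lra. }
  exists M. intros z Hz. specialize (HM z Hz). lra.
Qed.

Lemma LA : (forall eta, 0 < eta -> exists X, forall x, X < x -> 1 - Fs x <= (k + eta) * (1 - F0 x)) ->
  forall eps, 0 < eps -> exists T, forall t, T < t -> U Fs t <= (K + eps) * U F0 t.
Proof.
  intros HA eps He. assert (HK := K_pos).
  set (mu := K + eps). set (lam := K + eps / 2). set (th := mu / lam).
  assert (Hlam : 0 < lam) by (unfold lam; lra).
  assert (Hth : 1 < th).
  { unfold th. apply Rmult_lt_reg_r with lam; auto. unfold Rdiv. rewrite Rmult_assoc, Rinv_l by lra. unfold mu, lam. lra. }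
  set (rho := Rpower lam (- / g)).
  assert (Hrho : 0 < rho) by apply rp_pos.
  assert (Hkr : k * rho < 1).
  { unfold rho. rewrite Rpower_Ropp.
    assert (k < Rpower lam (/ g)).
    { rewrite <- K_alpha. apply Rlt_Rpower_l. apply Rinv_0_lt_compat; auto. unfold lam. lra. }
    assert (0 < Rpower lam (/ g)) by apply rp_pos.
    apply Rmult_lt_reg_r with (Rpower lam (/ g)); auto. rewrite Rmult_assoc, Rinv_l by lra. lra. }
  set (m := 1 - k * rho).
  set (eta := Rmin 1 (m / (k + rho + 1))).
  assert (Heta : 0 < eta) by (apply Rmin_pos; [lra|apply Rdiv_lt_0_compat; unfold m; lra]).
  assert (Heta1 : eta <= 1) by apply Rmin_l.
  assert (Heta2 : eta * (k + rho + 1) <= m).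
  { assert (eta <= m / (k + rho + 1)) by apply Rmin_r.
    apply Rmult_le_compat_r with (r := k + rho + 1) in H; [|lra].
    replace (m / (k + rho + 1) * (k + rho + 1)) with m in H by (field; lra). auto. }
  assert (Hprod : (k + eta) * (rho + eta) <= 1) by (unfold m in Heta2; nra).
  destruct (HA eta Heta) as [X HX].
  destruct (RVup lam eta Hlam Heta) as [Y HY]. fold rho in HY.
  assert (Hmu : 0 < mu) by (unfold mu; lra).
  set (M := Rmax (Rmax (Rabs X / mu) (Rabs Y)) 1 + 1).
  destruct (U0_inf M) as [T [HT1 HT]].
  exists T. intros t Ht.
  assert (Ht1 : 1 < t) by lra. assert (Hp := ppos t Ht1).
  set (y := U F0 t). specialize (HT t Ht). fold y in HT.
  assert (HM1 : Rabs X / mu + 1 <= M) by (unfold M; generalize (Rmax_l (Rmax (Rabs X / mu) (Rabs Y)) 1) (Rmax_l (Rabs X / mu) (Rabs Y)); lra).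
  assert (HM2 : Rabs Y + 1 <= M) by (unfold M; generalize (Rmax_l (Rmax (Rabs X / mu) (Rabs Y)) 1) (Rmax_r (Rabs X / mu) (Rabs Y)); lra).
  assert (HM3 : 1 + 1 <= M) by (unfold M; generalize (Rmax_r (Rmax (Rabs X / mu) (Rabs Y)) 1); lra).
  assert (Hy0 : 1 < y) by lra.
  assert (Hthy : y < th * y) by nra.
  assert (H1 : 1 - F0 (th * y) <= / t).
  { assert (1 - / t <= F0 (th * y)) by (apply ginv_gt; auto). lra. }
  assert (Hmuy : mu * y = lam * (th * y)) by (unfold th; field; lra).
  assert (H2 : 1 - F0 (mu * y) <= (rho + eta) * (1 - F0 (th * y))).
  { rewrite Hmuy. apply HY. generalize (RRle_abs Y). nra. }
  assert (H3 : 1 - Fs (mu * y) <= (k + eta) * (1 - F0 (mu * y))).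
  { apply HX. assert (Rabs X < mu * y).
    { apply Rmult_lt_reg_r with (/ mu). apply Rinv_0_lt_compat; auto.
      replace (mu * y * / mu) with y by (field; lra). unfold Rdiv in HM1. lra. }
    generalize (RRle_abs X). lra. }
  assert (H4 : 1 - Fs (mu * y) <= / t).
  { assert (Hq := Hpos0 (th * y)).
    assert ((k + eta) * (1 - F0 (mu * y)) <= (k + eta) * ((rho + eta) * (1 - F0 (th * y)))) by (apply Rmult_le_compat_l; lra).
    assert ((k + eta) * ((rho + eta) * (1 - F0 (th * y))) <= 1 * (1 - F0 (th * y))) by (rewrite <- Rmult_assoc; apply Rmult_le_compat_r; lra).
    lra. }
  unfold U. fold mu. apply ginv_le; auto. lra.
Qed.


Lemma LB : (forall eta, 0 < eta -> exists X, forall x, X < x -> (k - eta) * (1 - F0 x) <= 1 - Fs x) ->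
  forall eps, 0 < eps -> eps < K -> exists T, forall t, T < t -> (K - eps) * U F0 t <= U Fs t.
Proof.
  intros HB eps He HeK. assert (HK := K_pos).
  set (mu := K - eps). set (lam := K - eps / 2). set (th := mu / lam).
  assert (Hlam : 0 < lam) by (unfold lam; lra).
  assert (Hmu : 0 < mu) by (unfold mu; lra).
  assert (Hth : th < 1).
  { unfold th. apply Rmult_lt_reg_r with lam; auto. unfold Rdiv. rewrite Rmult_assoc, Rinv_l by lra. unfold mu, lam. lra. }
  assert (Hth0 : 0 < th) by (unfold th; apply Rdiv_lt_0_compat; auto).
  set (rho := Rpower lam (- / g)).
  assert (Hrho : 0 < rho) by apply rp_pos.
  assert (Hkr : 1 < k * rho).
  { unfold rho. rewrite Rpower_Ropp.
    assert (Rpower lam (/ g) < k).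
    { rewrite <- K_alpha. apply Rlt_Rpower_l. apply Rinv_0_lt_compat; auto. unfold lam. lra. }
    assert (0 < Rpower lam (/ g)) by apply rp_pos.
    apply Rmult_lt_reg_r with (Rpower lam (/ g)); auto. rewrite Rmult_assoc, Rinv_l by lra. lra. }
  set (m := k * rho - 1).
  set (eta := Rmin (m / (k + rho)) (Rmin k rho / 2)).
  assert (Hmin : 0 < Rmin k rho) by (apply Rmin_pos; auto).
  assert (Heta : 0 < eta) by (apply Rmin_pos; [apply Rdiv_lt_0_compat; unfold m; lra|lra]).
  assert (Heta1 : eta < k) by (generalize (Rmin_r (m / (k + rho)) (Rmin k rho / 2)) (Rmin_l k rho); unfold eta; lra).
  assert (Heta3 : eta < rho) by (generalize (Rmin_r (m / (k + rho)) (Rmin k rho / 2)) (Rmin_r k rho); unfold eta; lra).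
  assert (Heta2 : eta * (k + rho) <= m).
  { assert (eta <= m / (k + rho)) by apply Rmin_l.
    apply Rmult_le_compat_r with (r := k + rho) in H; [|lra].
    replace (m / (k + rho) * (k + rho)) with m in H by (field; lra). auto. }
  assert (Hprod : 1 <= (k - eta) * (rho - eta)) by (unfold m in Heta2; nra).
  destruct (HB eta Heta) as [X HX].
  destruct (RVlo lam eta Hlam Heta) as [Y HY]. fold rho in HY.
  set (M := Rmax (Rmax (Rabs X / mu) (Rabs Y / th)) 1 + 1).
  destruct (U0_inf M) as [T [HT1 HT]].
  exists T. intros t Ht.
  assert (Ht1 : 1 < t) by lra. assert (Hp := ppos t Ht1).
  set (y := U F0 t). specialize (HT t Ht). fold y in HT.
  assert (HM1 : Rabs X / mu + 1 <= M) by (unfold M; generalize (Rmax_l (Rmax (Rabs X / mu) (Rabs Y / th)) 1) (Rmax_l (Rabs X / mu) (Rabs Y / th)); lra).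
  assert (HM2 : Rabs Y / th + 1 <= M) by (unfold M; generalize (Rmax_l (Rmax (Rabs X / mu) (Rabs Y / th)) 1) (Rmax_r (Rabs X / mu) (Rabs Y / th)); lra).
  assert (HM3 : 1 + 1 <= M) by (unfold M; generalize (Rmax_r (Rmax (Rabs X / mu) (Rabs Y / th)) 1); lra).
  assert (Hy0 : 1 < y) by lra.
  assert (Hthy : th * y < y) by nra.
  assert (H1 : / t < 1 - F0 (th * y)).
  { assert (F0 (th * y) < 1 - / t) by (apply ginv_lt; auto). lra. }
  assert (Hmuy : mu * y = lam * (th * y)) by (unfold th; field; lra).
  assert (H2 : (rho - eta) * (1 - F0 (th * y)) <= 1 - F0 (mu * y)).
  { rewrite Hmuy. apply HY. assert (Rabs Y < th * y).
    { apply Rmult_lt_reg_r with (/ th). apply Rinv_0_lt_compat; auto.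
      replace (th * y * / th) with y by (field; lra). unfold Rdiv in HM2. lra. }
    generalize (RRle_abs Y). lra. }
  assert (H3 : (k - eta) * (1 - F0 (mu * y)) <= 1 - Fs (mu * y)).
  { apply HX. assert (Rabs X < mu * y).
    { apply Rmult_lt_reg_r with (/ mu). apply Rinv_0_lt_compat; auto.
      replace (mu * y * / mu) with y by (field; lra). unfold Rdiv in HM1. lra. }
    generalize (RRle_abs X). lra. }
  assert (H4 : / t < 1 - Fs (mu * y)).
  { assert (Hq := Hpos0 (th * y)).
    assert ((k - eta) * ((rho - eta) * (1 - F0 (th * y))) <= (k - eta) * (1 - F0 (mu * y))) by (apply Rmult_le_compat_l; lra).
    assert (1 * (1 - F0 (th * y)) <= (k - eta) * ((rho - eta) * (1 - F0 (th * y)))) by (rewrite <- Rmult_assoc; apply Rmult_le_compat_r; lra).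
    lra. }
  unfold U. fold mu. apply ginv_ge; auto. lra.
Qed.


Lemma LC : (forall eps, 0 < eps -> exists T, forall t, T < t -> U Fs t <= (K + eps) * U F0 t) ->
  forall eps, 0 < eps -> exists X, forall x, X < x -> 1 - Fs x <= (k + eps) * (1 - F0 x).
Proof.
  intros HC eps He. assert (HK := K_pos).
  set (mu2 := Rpower (k + eps / 2) g).
  assert (Hmu2 : K < mu2) by (apply Rlt_Rpower_l; auto; lra).
  assert (Hmu2a : Rpower mu2 (/ g) = k + eps / 2) by (apply rp_g_inv; auto; lra).
  set (mu := (K + mu2) / 2).
  destruct (HC (mu - K)) as [T HT]; [unfold mu; lra|].
  assert (Hmu2p : 0 < mu2) by lra.
  assert (Hl : 0 < / mu2) by (apply Rinv_0_lt_compat; auto).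
  destruct (RVup (/ mu2) (eps / 2) Hl) as [Y HY]; [lra|].
  rewrite rp_inv_neg, Hmu2a in HY by auto.
  set (T2 := Rmax T 1 + 1).
  assert (HT2 : 0 < T2) by (unfold T2; generalize (Rmax_r T 1); lra).
  destruct (h0_small T2 HT2) as [M0 HM0].
  exists (Rmax (Rmax (Rabs M0 * mu2) (Rabs Y)) 1). intros x Hx.
  assert (Hx1 : Rabs M0 * mu2 < x) by (generalize (Rmax_l (Rmax (Rabs M0 * mu2) (Rabs Y)) 1) (Rmax_l (Rabs M0 * mu2) (Rabs Y)); lra).
  assert (Hx2 : Rabs Y < x) by (generalize (Rmax_l (Rmax (Rabs M0 * mu2) (Rabs Y)) 1) (Rmax_r (Rabs M0 * mu2) (Rabs Y)); lra).
  assert (Hx3 : 1 < x) by (generalize (Rmax_r (Rmax (Rabs M0 * mu2) (Rabs Y)) 1); lra).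
  set (y := / mu2 * x).
  assert (Hy : M0 < y).
  { assert (Rabs M0 < y).
    { unfold y. apply Rmult_lt_reg_l with mu2; auto. rewrite <- Rmult_assoc, Rinv_r, Rmult_1_l by lra. lra. }
    generalize (RRle_abs M0). lra. }
  assert (Hhy := Hpos0 y). specialize (HM0 y Hy).
  set (t := / (1 - F0 y)).
  assert (Ht : T2 < t) by (apply inv_swap; auto).
  assert (Ht1 : 1 < t) by (unfold T2 in Ht; generalize (Rmax_r T 1); lra).
  assert (HtT : T < t) by (unfold T2 in Ht; generalize (Rmax_l T 1); lra).
  assert (Hit : / t = 1 - F0 y) by (unfold t; apply Rinv_inv).
  assert (Hp := ppos t Ht1).
  assert (HU0 : U F0 t <= y) by (unfold U; apply ginv_le; auto; lra).
  specialize (HT t HtT). assert (EK : K + (mu - K) = mu) by lra. rewrite EK in HT.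
  assert (Hmux : mu * y < x).
  { assert (0 < y) by (unfold y; apply Rmult_lt_0_compat; lra).
    assert (mu * y < mu2 * y) by (apply Rmult_lt_compat_r; auto; unfold mu; lra).
    unfold y in H0 at 2. rewrite <- Rmult_assoc, Rinv_r, Rmult_1_l in H0 by lra. lra. }
  assert (HUs : U Fs t < x).
  { assert (mu * U F0 t <= mu * y) by (apply Rmult_le_compat_l; auto; unfold mu; lra). lra. }
  assert (1 - / t <= Fs x) by (apply ginv_gt; auto).
  specialize (HY x ltac:(generalize (RRle_abs Y); lra)). fold y in HY.
  replace (k + eps / 2 + eps / 2) with (k + eps) in HY by field.
  lra.
Qed.


Lemma LD : (forall eps, 0 < eps -> eps < K -> exists T, forall t, T < t -> (K - eps) * U F0 t <= U Fs t) ->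
  forall eps, 0 < eps -> eps < k -> exists X, forall x, X < x -> (k - eps) * (1 - F0 x) <= 1 - Fs x.
Proof.
  intros HD eps He Hek. assert (HK := K_pos).
  set (nu := k - eps / 2).
  set (nug := Rpower nu g).
  assert (Hnug : nug < K) by (apply Rlt_Rpower_l; auto; unfold nu; lra).
  assert (Hnug0 : 0 < nug) by apply rp_pos.
  assert (Hnua : Rpower nug (/ g) = nu) by (apply rp_g_inv; auto; unfold nu; lra).
  set (mu := (K + nug) / 2).
  destruct (HD (K - mu)) as [T HT]; [unfold mu; lra|unfold mu; lra|].
  assert (Hl : 0 < / nug) by (apply Rinv_0_lt_compat; auto).
  destruct (RVlo (/ nug) (eps / 4) Hl) as [Y HY]; [lra|].
  rewrite rp_inv_neg, Hnua in HY by auto.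
  set (eta := eps / (4 * (k + 1))).
  assert (Heta : 0 < eta) by (unfold eta; apply Rdiv_lt_0_compat; lra).
  assert (Hetak : eta * k <= eps / 4).
  { unfold eta. replace (eps / (4 * (k + 1)) * k) with (eps / 4 * (k / (k + 1))) by (field; lra).
    assert (k / (k + 1) <= 1).
    { apply Rmult_le_reg_r with (k + 1); [lra|]. unfold Rdiv. rewrite Rmult_assoc, Rinv_l by lra. lra. }
    assert (0 <= eps / 4) by lra. nra. }
  assert (Heta1 : eta < 1).
  { assert (eta * k < k) by lra. nra. }
  set (T2 := Rmax T 1 + 1).
  assert (HT2 : 0 < T2) by (unfold T2; generalize (Rmax_r T 1); lra).
  destruct (h0_small T2 HT2) as [M0 HM0].
  exists (Rmax (Rmax (Rabs M0 * nug) (Rabs Y)) 1). intros x Hx.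
  assert (Hx1 : Rabs M0 * nug < x) by (generalize (Rmax_l (Rmax (Rabs M0 * nug) (Rabs Y)) 1) (Rmax_l (Rabs M0 * nug) (Rabs Y)); lra).
  assert (Hx2 : Rabs Y < x) by (generalize (Rmax_l (Rmax (Rabs M0 * nug) (Rabs Y)) 1) (Rmax_r (Rabs M0 * nug) (Rabs Y)); lra).
  assert (Hx3 : 1 < x) by (generalize (Rmax_r (Rmax (Rabs M0 * nug) (Rabs Y)) 1); lra).
  set (y := / nug * x).
  assert (Hy : M0 < y).
  { assert (Rabs M0 < y).
    { unfold y. apply Rmult_lt_reg_l with nug; auto. rewrite <- Rmult_assoc, Rinv_r, Rmult_1_l by lra. lra. }
    generalize (RRle_abs M0). lra. }
  assert (Hhy := Hpos0 y). specialize (HM0 y Hy).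
  set (t := / ((1 - eta) * (1 - F0 y))).
  assert (Hq : 0 < (1 - eta) * (1 - F0 y)) by (apply Rmult_lt_0_compat; lra).
  assert (Ht : T2 < t).
  { apply inv_swap; auto. assert ((1 - eta) * (1 - F0 y) <= 1 * (1 - F0 y)) by (apply Rmult_le_compat_r; lra). lra. }
  assert (Ht1 : 1 < t) by (unfold T2 in Ht; generalize (Rmax_r T 1); lra).
  assert (HtT : T < t) by (unfold T2 in Ht; generalize (Rmax_l T 1); lra).
  assert (Hit : / t = (1 - eta) * (1 - F0 y)) by (unfold t; apply Rinv_inv).
  assert (Hp := ppos t Ht1).
  assert (HU0 : y <= U F0 t).
  { unfold U. apply ginv_ge; auto. rewrite Hit.
    assert (0 < eta * (1 - F0 y)) by (apply Rmult_lt_0_compat; lra). nra. }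
  specialize (HT t HtT). assert (EK : K - (K - mu) = mu) by lra. rewrite EK in HT.
  assert (Hmux : x < mu * y).
  { assert (0 < y) by (unfold y; apply Rmult_lt_0_compat; lra).
    assert (nug * y < mu * y) by (apply Rmult_lt_compat_r; auto; unfold mu; lra).
    unfold y in H0 at 1. rewrite <- Rmult_assoc, Rinv_r, Rmult_1_l in H0 by lra. lra. }
  assert (HUs : x < U Fs t).
  { assert (mu * y <= mu * U F0 t) by (apply Rmult_le_compat_l; auto; unfold mu; lra). lra. }
  assert (Fs x < 1 - / t) by (apply ginv_lt; auto).
  specialize (HY x ltac:(generalize (RRle_abs Y); lra)). fold y in HY.
  assert (Hh0x := Hpos0 x).
  assert (Hc : k - eps <= (1 - eta) * (nu - eps / 4)) by (unfold nu; nra).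
  assert ((1 - eta) * ((nu - eps / 4) * (1 - F0 x)) <= (1 - eta) * (1 - F0 y)) by (apply Rmult_le_compat_l; lra).
  assert ((k - eps) * (1 - F0 x) <= (1 - eta) * (nu - eps / 4) * (1 - F0 x)) by (apply Rmult_le_compat_r; lra).
  assert (Ea : (1 - eta) * ((nu - eps / 4) * (1 - F0 x)) = (1 - eta) * (nu - eps / 4) * (1 - F0 x)) by ring. lra.
Qed.


Lemma main_equiv : is_lim (fun x => (1 - Fs x) / (1 - F0 x)) p_infty k <->
  is_lim (fun t => U Fs t / U F0 t) p_infty K.
Proof.
  assert (HK := K_pos).
  split; intros H.
  - assert (HA : forall eta, 0 < eta -> exists X, forall x, X < x -> 1 - Fs x <= (k + eta) * (1 - F0 x)).
    { intros eta He. destruct (lim_pinf_elim _ _ H eta He) as [X HX]. exists X. intros x Hx.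
      specialize (HX x Hx). apply Rabs_def2 in HX. assert (Hp := Hpos0 x).
      replace (1 - Fs x) with ((1 - Fs x) / (1 - F0 x) * (1 - F0 x)) by (field; lra).
      apply Rmult_le_compat_r; lra. }
    assert (HB : forall eta, 0 < eta -> exists X, forall x, X < x -> (k - eta) * (1 - F0 x) <= 1 - Fs x).
    { intros eta He. destruct (lim_pinf_elim _ _ H eta He) as [X HX]. exists X. intros x Hx.
      specialize (HX x Hx). apply Rabs_def2 in HX. assert (Hp := Hpos0 x).
      replace (1 - Fs x) with ((1 - Fs x) / (1 - F0 x) * (1 - F0 x)) by (field; lra).
      apply Rmult_le_compat_r; lra. }
    apply lim_pinf_intro. intros eps He.
    set (e := Rmin (eps / 2) (K / 2)).
    assert (He1 : 0 < e) by (apply Rmin_pos; lra).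
    assert (He2 : e <= eps / 2) by apply Rmin_l.
    assert (He3 : e <= K / 2) by apply Rmin_r.
    destruct (LA HA e He1) as [T1 HT1].
    destruct (LB HB e He1 ltac:(lra)) as [T2 HT2].
    destruct (U0_inf 1) as [T3 [_ HT3]].
    exists (Rmax T1 (Rmax T2 T3)). intros t Ht.
    assert (h1 : T1 < t) by (generalize (Rmax_l T1 (Rmax T2 T3)); lra).
    assert (h2 : T2 < t) by (generalize (Rmax_r T1 (Rmax T2 T3)) (Rmax_l T2 T3); lra).
    assert (h3 : T3 < t) by (generalize (Rmax_r T1 (Rmax T2 T3)) (Rmax_r T2 T3); lra).
    specialize (HT1 t h1). specialize (HT2 t h2). specialize (HT3 t h3).
    apply bound_ratio with e; auto; lra.
  - assert (HU : exists T, forall t, T < t -> 0 < U F0 t).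
    { destruct (U0_inf 1) as [T [_ HT]]. exists T. intros t Ht. specialize (HT t Ht). lra. }
    destruct HU as [T0 HT0].
    assert (HC : forall eps, 0 < eps -> exists T, forall t, T < t -> U Fs t <= (K + eps) * U F0 t).
    { intros eta He. destruct (lim_pinf_elim _ _ H eta He) as [X HX]. exists (Rmax X T0). intros x Hx.
      specialize (HX x ltac:(generalize (Rmax_l X T0); lra)). apply Rabs_def2 in HX.
      assert (Hp := HT0 x ltac:(generalize (Rmax_r X T0); lra)).
      replace (U Fs x) with (U Fs x / U F0 x * U F0 x) by (field; lra).
      apply Rmult_le_compat_r; lra. }
    assert (HD : forall eps, 0 < eps -> eps < K -> exists T, forall t, T < t -> (K - eps) * U F0 t <= U Fs t).
    { intros eta He _. destruct (lim_pinf_elim _ _ H eta He) as [X HX]. exists (Rmax X T0). intros x Hx.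
      specialize (HX x ltac:(generalize (Rmax_l X T0); lra)). apply Rabs_def2 in HX.
      assert (Hp := HT0 x ltac:(generalize (Rmax_r X T0); lra)).
      replace (U Fs x) with (U Fs x / U F0 x * U F0 x) by (field; lra).
      apply Rmult_le_compat_r; lra. }
    apply lim_pinf_intro. intros eps He.
    set (e := Rmin (eps / 2) (k / 2)).
    assert (He1 : 0 < e) by (apply Rmin_pos; lra).
    assert (He2 : e <= eps / 2) by apply Rmin_l.
    assert (He3 : e <= k / 2) by apply Rmin_r.
    destruct (LC HC e He1) as [X1 HX1].
    destruct (LD HD e He1 ltac:(lra)) as [X2 HX2].
    exists (Rmax X1 X2). intros x Hx.
    specialize (HX1 x ltac:(generalize (Rmax_l X1 X2); lra)).
    specialize (HX2 x ltac:(generalize (Rmax_r X1 X2); lra)).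
    apply bound_ratio with e; auto; try lra.
Qed.

End Main.


Theorem mainTheorem5 (F0 Fs : R -> R) (c s gamma : R) :
  distribution_function F0 -> distribution_function Fs ->
  0 <= s -> 0 < gamma ->
  max_domain_of_attraction F0 gamma ->
  (is_lim (fun x => (1 - Fs x) / (1 - F0 x)) p_infty (exp (c * s))
   <->
   is_lim (fun t => U Fs t / U F0 t) p_infty (exp (c * gamma * s))).
Proof.
  intros HF0 HFs Hs Hg Hmda.
  destruct (mda_seq F0 gamma HF0 Hg Hmda) as [a [b [Ha Hlim]]].
  set (h := fun y => 1 - F0 y).
  assert (Hh : forall x y, x <= y -> h y <= h x).
  { intros x y Hxy. unfold h. generalize (df_mono F0 HF0 x y Hxy). lra. }
  assert (Hlim' : forall x, 0 < 1 + gamma * x ->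
    is_lim_seq (fun n => INR n * h (a n * x + b n)) (phi gamma x)) by exact Hlim.
  assert (Hh0 : forall eta, 0 < eta -> exists Y, forall y, Y < y -> h y < eta).
  { intros eta He. destruct (df_big F0 HF0 (1 - eta)) as [Y HY]; [lra|].
    exists Y. intros y Hy. specialize (HY y Hy). unfold h. lra. }
  assert (Hpos0 : forall y, 0 < 1 - F0 y) by (intros y; apply (h_pos h a b gamma Hg Ha Hh Hlim' y)).
  assert (HRV := RV h a b gamma Hg Ha Hh Hlim' Hh0).
  assert (HK : exp (c * gamma * s) = Rpower (exp (c * s)) gamma).
  { unfold Rpower. rewrite ln_exp. f_equal. ring. }
  rewrite HK.
  apply main_equiv; auto. apply exp_pos.
Qed.
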